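(* Let $\tau>1$, let $\kappa\ge3$ be an integer and let $x^\dagger\in\mathcal X$ satisfy $\bar k^\delta_{\mathrm{pr}}(x^\dagger)\ge\kappa$. Then on the event $\Omega_\kappa$, writing $k^\delta_{\mathrm{pr}}=k^\delta_{\mathrm{pr}}(x^\dagger)$, $$\sum_{j=k^\delta_{\mathrm{dp}}+1}^{k^\delta_{\mathrm{pr}}}(y^\dagger,u_j)^2\le\frac{(3\tau+1)^2}{4}\,k^\delta_{\mathrm{pr}}\,\delta^2,$$ where the sum is $0$ if $k^\delta_{\mathrm{dp}}\ge k^\delta_{\mathrm{pr}}$.
   Context: Setting: $K:\mathcal X\to\mathcal Y$ compact injective with dense range between infinite-dimensional real separable Hilbert spaces, singular system $(\sigma_j,v_j,u_j)$ ($(v_j),(u_j)$ orthonormal bases, $\sigma_1\ge\sigma_2\ge\dots>0$, $Kv_j=\sigma_ju_j$, $K^*u_j=\sigma_jv_j$); $y^\dagger=Kx^\dagger$, $\delta>0$, data $(y^\delta,u_j):=(y^\dagger,u_j)+\delta(Z,u_j)$ with real random variables $(Z,u_j)$. For $m\in\mathbb N$: $k^\delta_{\mathrm{dp}}(m):=\min\{k\in\{0,\dots,m\}:\sqrt{\sum_{j=k+1}^m(y^\delta,u_j)^2}\le\tau\sqrt m\,\delta\}$, $k^\delta_{\mathrm{dp}}:=\sup_{m\in\mathbb N}k^\delta_{\mathrm{dp}}(m)$. With $\min\emptyset=\infty$: $k^\delta_{\mathrm{pr}}(x^\dagger):=\min\{k\in\mathbb N_0:\sum_{j=1}^k(y^\delta-y^\dagger,u_j)^2\ge\sum_{j=k+1}^\infty(y^\dagger,u_j)^2\}$,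 $\bar k^\delta_{\mathrm{pr}}(x^\dagger):=\min\{k\in\mathbb N_0:\delta^2k\ge\sum_{j=k+1}^\infty(y^\dagger,u_j)^2\}$. With $\varepsilon_\tau:=\min\big(\frac{(\tau+1)^2}{4}-1,\frac13\big)$, $$\Omega_\kappa:=\Big\{\Big|\sum_{j=1}^m(y^\delta-y^\dagger,u_j)^2-m\delta^2\Big|\le\varepsilon_\tau m\delta^2\ \text{for all integers } m\ge\kappa/3\Big\}.$$ *)

(* Defs.v *)
From HB Require Import structures.
From mathcomp Require Import all_boot all_order all_algebra.
From mathcomp Require Import all_classical all_reals all_analysis.
Set Implicit Arguments. Unset Strict Implicit. Unset Printing Implicit Defensive.
Import Order.TTheory GRing.Theory Num.Theory.
Local Open Scope ring_scope.

(* Extended naturals N_0 \cup {oo}: [Some n] = n, [None] = oo. *)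

Lemma ex_asbool (P : nat -> Prop) : (exists n, P n) -> exists n, `[< P n >].
Proof. by case=> n Pn; exists n; apply/asboolP. Qed.

Definition omin (P : nat -> Prop) : option nat :=
  match pselect (exists n, P n) with
  | left h => Some (ex_minn (ex_asbool h))
  | right _ => None
  end.

Definition le_onat (a : nat) (o : option nat) : bool :=
  if o is Some n then (a <= n)%N else true.

Definition lt_onat (o : option nat) (j : nat) : bool :=
  if o is Some n then (n < j)%N else false.

Section Defs.
Variable R : realType.

Definition tailsq (b : nat -> R) (k : nat) : R :=
  limn (fun n => \sum_(k.+1 <= j < n) b j ^+ 2).

(* k^delta_dp(m); yd j = (y^delta, u_j) *)
Definition kdp_m (tau delta : R) (yd : nat -> R) (m : nat) : option nat :=
  omin (fun k => (k <= m)%N /\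
    Num.sqrt (\sum_(k.+1 <= j < m.+1) yd j ^+ 2)
      <= tau * Num.sqrt (m%:R) * delta).

(* k^delta_dp := sup_{m in N} k^delta_dp(m) (least upper bound in N_0 \cup {oo}) *)
Definition kdp (tau delta : R) (yd : nat -> R) : option nat :=
  omin (fun N => forall m k, (0 < m)%N -> kdp_m tau delta yd m = Some k -> (k <= N)%N).

(* k^delta_pr(x^dagger); b j = (y^dagger,u_j), e j = (y^delta - y^dagger, u_j) *)
Definition kpr (b e : nat -> R) : option nat :=
  omin (fun k => \sum_(1 <= j < k.+1) e j ^+ 2 >= tailsq b k).

Definition kpr_bar (delta : R) (b : nat -> R) : option nat :=
  omin (fun k => delta ^+ 2 * k%:R >= tailsq b k).

Definition eps_tau (tau : R) : R :=
  Num.min ((tau + 1) ^+ 2 / 4 - 1) (3^-1).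

(* the event Omega_kappa, evaluated at an outcome with noise e j = (y^delta - y^dagger,u_j) *)
Definition Omega (tau delta : R) (kappa : nat) (e : nat -> R) : Prop :=
  forall m : nat, (m%:R : R) >= kappa%:R / 3 ->
    `| \sum_(1 <= j < m.+1) e j ^+ 2 - m%:R * delta ^+ 2 |
      <= eps_tau tau * m%:R * delta ^+ 2.

End Defs.

(* Main.v *)
Require Import Defs.
From HB Require Import structures.
From mathcomp Require Import all_boot all_order all_algebra.
From mathcomp Require Import all_classical all_reals all_analysis.
From mathcomp Require Import ring lra zify.
Import Order.TTheory GRing.Theory Num.Theory numFieldNormedType.Exports.
Local Open Scope classical_set_scope.
Local Open Scope ring_scope.

Lemma ominS (P : nat -> Prop) n : omin P = Some n -> P n /\ forall k, P k -> (n <= k)%N.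
Proof.
rewrite /omin; case: pselect => // h [<-].
case: ex_minnP => m /asboolP Pm H; split=> // k Pk; apply: H; exact/asboolP.
Qed.

Lemma ominN (P : nat -> Prop) : omin P = None -> forall k, ~ P k.
Proof. by rewrite /omin; case: pselect => // h _ k Pk; apply: h; exists k. Qed.

Lemma ominE (P : nat -> Prop) k : P k -> exists n, omin P = Some n.
Proof.
rewrite /omin; case: pselect => [h|h] Pk; first by eexists.
by exfalso; apply: h; exists k.
Qed.

Lemma sum_mono (R : realType) (f : nat -> R) (P Q : pred nat) (N M : nat) :
  (N <= M)%N -> (forall i, (i < N)%N -> P i -> Q i) ->
  (forall i, (i < M)%N -> Q i -> 0 <= f i) ->
  \sum_(0 <= i < N | P i) f i <= \sum_(0 <= i < M | Q i) f i.
Proof.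
move=> NM PQ f0; rewrite (big_nat_widen 0 N M) // big_mkcond /=.
rewrite [X in _ <= X]big_mkcond /=.
apply: ler_sum_nat => i /andP[_ iM].
case: (boolP (i < N)%N) => iN; rewrite ?andbT ?andbF.
  case: (boolP (P i)) => Pi; first by rewrite (PQ i iN Pi).
  by case: (boolP (Q i)) => Qi //; apply: f0.
by case: (boolP (Q i)) => Qi //; apply: f0.
Qed.

Lemma sum_shift (R : realType) (f : nat -> R) (a N : nat) :
  \sum_(a <= i < N) f i = \sum_(0 <= i < N | (a <= i)%N) f i.
Proof. by rewrite !big_geq_mkord; apply: eq_bigl => i; rewrite andbT. Qed.

Lemma natle (R : realType) (a c : nat) : (a <= c)%N -> (a%:R <= c%:R :> R).
Proof. by rewrite ler_nat. Qed.

Lemma pw (R : realType) (p q y e : R) : 0 < p -> 0 < q ->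
  (y - e) ^+ 2 <= (1 + p / q) * y ^+ 2 + (1 + q / p) * e ^+ 2.
Proof.
move=> p0 q0; rewrite -subr_ge0.
have -> : (1 + p / q) * y ^+ 2 + (1 + q / p) * e ^+ 2 - (y - e) ^+ 2
   = (p * y + q * e) ^+ 2 / (p * q).
  by field; apply/andP; split; rewrite gt_eqF.
by apply: divr_ge0; [apply: sqr_ge0 | apply: mulr_ge0; apply: ltW].
Qed.

Lemma tail_cvg (R : realType) (sigma xc : nat -> R) (k : nat) :
  (forall j, (0 < j)%N -> 0 < sigma j) ->
  (forall i j, (0 < i)%N -> (i <= j)%N -> sigma j <= sigma i) ->
  cvgn (series (fun j => xc j ^+ 2)) ->
  cvgn (fun n => \sum_(k.+1 <= j < n) (sigma j * xc j) ^+ 2).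
Proof.
move=> Hpos Hmono Hcvg.
apply: nondecreasing_is_cvgn.
  by apply: nondecreasing_series => n _ _; apply: sqr_ge0.
exists (sigma 1%N ^+ 2 * limn (series (fun j => xc j ^+ 2))).
move=> _ [N _ <-].
apply: (@le_trans _ _ (\sum_(k.+1 <= j < N) sigma 1%N ^+ 2 * xc j ^+ 2)).
  apply: ler_sum_nat => j /andP[kj _].
  rewrite exprMn; apply: ler_wpM2r; first exact: sqr_ge0.
  have h1 := Hpos j (leq_ltn_trans (leq0n k) kj).
  have h2 := Hmono 1%N j isT (leq_ltn_trans (leq0n k) kj).
  have h3 := Hpos 1%N isT.
  nra.
rewrite -mulr_sumr; apply: ler_wpM2l; first exact: sqr_ge0.
apply: (@le_trans _ _ (series (fun j => xc j ^+ 2) N)); last first.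
  apply: nondecreasing_cvgn_le => //.
  by apply: nondecreasing_series => n _ _; apply: sqr_ge0.
rewrite /series /= sum_shift.
have -> : \sum_(0 <= i < N) xc i ^+ 2 = \sum_(0 <= i < N | true) xc i ^+ 2 by [].
apply: sum_mono => // i _ _; exact: sqr_ge0.
Qed.

Lemma tail_mono (R : realType) (sigma xc : nat -> R) (k k' : nat) :
  (forall j, (0 < j)%N -> 0 < sigma j) ->
  (forall i j, (0 < i)%N -> (i <= j)%N -> sigma j <= sigma i) ->
  cvgn (series (fun j => xc j ^+ 2)) -> (k <= k')%N ->
  tailsq (fun j => sigma j * xc j) k' <= tailsq (fun j => sigma j * xc j) k.
Proof.
move=> Hpos Hmono Hcvg kk; rewrite /tailsq; apply: ler_lim.
- exact: tail_cvg.
- exact: tail_cvg.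
apply: nearW => N; rewrite !sum_shift; apply: sum_mono => //.
  by move=> i _ h; apply: leq_trans h.
by move=> i _ _; apply: sqr_ge0.
Qed.

Lemma l1 a b : (a <= 3 * (a + b))%N. Proof. lia. Qed.
Lemma l2 a b : (3 <= a)%N -> (a <= b)%N -> (b <= a.-1)%N -> False. Proof. lia. Qed.
Lemma l3 a n : (3 * n < a)%N -> (n <= a.-1)%N. Proof. lia. Qed.
Lemma l4 a n m : (3 * n < a)%N -> (a <= 3 * m)%N -> (n <= m)%N. Proof. lia. Qed.
Lemma l5 i K n : (i < n.+1)%N -> (K < i)%N -> (n <= K)%N -> false. Proof. lia. Qed.

Theorem mainTheorem12 (R : realType) (sigma xc : nat -> R)
  (Omg : Type) (Zc : nat -> Omg -> R)
  (tau delta : R) (kappa : nat) :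
  (forall j, (0 < j)%N -> 0 < sigma j) ->
  (forall i j, (0 < i)%N -> (i <= j)%N -> sigma j <= sigma i) ->
  sigma @ \oo --> 0 ->
  cvgn (series (fun j => xc j ^+ 2)) ->
  0 < delta -> 1 < tau -> (3 <= kappa)%N ->
  let b := fun j => sigma j * xc j in
  le_onat kappa (kpr_bar delta b) ->
  forall w : Omg,
    let e := fun j => delta * Zc j w in
    let yd := fun j => b j + e j in
    Omega tau delta kappa e ->
    exists2 n, kpr b e = Some n &
      \sum_(0 <= j < n.+1 | lt_onat (kdp tau delta yd) j) b j ^+ 2
        <= (3 * tau + 1) ^+ 2 / 4 * n%:R * delta ^+ 2.
Proof.
move=> Hpos Hmono _ Hcvg Hd Ht Hk b Hbar w e yd Hom.
set eps := eps_tau tau.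
have eps1 : eps <= (tau + 1) ^+ 2 / 4 - 1 by rewrite /eps /eps_tau ge_min lexx.
have eps2 : eps <= 3^-1 by rewrite /eps /eps_tau ge_min lexx orbT.
have d2 : 0 < delta ^+ 2 by apply: exprn_gt0.
have Eb : forall m, (kappa <= 3 * m)%N ->
    (1 - eps) * m%:R * delta ^+ 2 <= \sum_(1 <= j < m.+1) e j ^+ 2 /\
    \sum_(1 <= j < m.+1) e j ^+ 2 <= (1 + eps) * m%:R * delta ^+ 2.
  move=> m km; have := Hom m.
  have hm : kappa%:R / 3 <= (m%:R : R).
    rewrite ler_pdivrMr //; have := natle R kappa (m * 3).
    by rewrite natrM; apply; rewrite mulnC.
  move=> /(_ hm); rewrite ler_norml => /andP[h1 h2]; rewrite -/eps in h1 h2; split; lra.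
have hT : forall k k', (k <= k')%N -> tailsq b k' <= tailsq b k.
  by move=> k k' kk; apply: tail_mono.
have Emono : forall n m, (n <= m)%N ->
    \sum_(1 <= j < n.+1) e j ^+ 2 <= \sum_(1 <= j < m.+1) e j ^+ 2.
  move=> n m nm; rewrite !sum_shift; apply: sum_mono => //.
  by move=> i _ _; apply: sqr_ge0.
pose m0 := ((kappa + 2) %/ 3)%N.
have m0a : (kappa <= 3 * m0)%N by rewrite /m0; lia.
have m0b : (4 * m0 <= 3 * kappa.-1)%N by rewrite /m0; lia.
pose T := tailsq b 0.
pose x := Num.max 0 (3 * T / (2 * delta ^+ 2)).
have x0 : 0 <= x by rewrite /x le_max lexx.
have := archi_boundP x0; set N := Num.Def.archi_bound x => xN.
have [n kn] : exists n, kpr b e = Some n.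
  apply: (@ominE _ (kappa + N)%N).
  have [hlo _] := Eb (kappa + N)%N (l1 kappa N).
  have tm : tailsq b (kappa + N) <= T by apply: hT.
  have h3 : 3 * T / (2 * delta ^+ 2) < N%:R.
    by apply: le_lt_trans xN; rewrite /x le_max lexx orbT.
  rewrite ltr_pdivrMr ?mulr_gt0 // in h3.
  have hN : (N%:R : R) <= (kappa + N)%N%:R by apply: natle; apply: leq_addl.
  have h4 : eps * ((kappa + N)%N%:R * delta ^+ 2) <= 3^-1 * ((kappa + N)%N%:R * delta ^+ 2).
    by apply: ler_wpM2r => //; apply: mulr_ge0 => //; apply: ltW.
  have h5 : N%:R * delta ^+ 2 <= (kappa + N)%N%:R * delta ^+ 2.
    by apply: ler_wpM2r => //; apply: ltW.
  lra.
have [Pn nmin] := ominS _ _ kn.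
have kn3 : (kappa <= 3 * n)%N.
  rewrite leqNgt; apply/negP => hn.
  have hbar : delta ^+ 2 * (kappa.-1)%:R < tailsq b (kappa.-1).
    rewrite ltNge; apply/negP => hP.
    move: Hbar; case hk: (kpr_bar delta b) => [kb|] /= Hb.
      have [_ hmin] := ominS _ _ hk; exact: (l2 _ _ Hk Hb (hmin _ hP)).
    by have := ominN _ hk _ hP.
  have t1 : tailsq b (kappa.-1) <= tailsq b n by apply: hT; apply: l3.
  have [_ hup] := Eb m0 m0a.
  have e1 := Emono n m0 (l4 _ _ _ hn m0a).
  have m0r : 4 * (m0%:R : R) <= 3 * (kappa.-1)%:R.
    have := natle R (4 * m0) (3 * kappa.-1) m0b; by rewrite !natrM.
  have h4 : eps * (m0%:R * delta ^+ 2) <= 3^-1 * (m0%:R * delta ^+ 2).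
    by apply: ler_wpM2r => //; apply: mulr_ge0 => //; apply: ltW.
  have h5 : 4 * m0%:R * delta ^+ 2 <= 3 * (kappa.-1)%:R * delta ^+ 2.
    by apply: ler_wpM2r => //; apply: ltW.
  lra.
exists n => //.
case hK: (kdp tau delta yd) => [K|]; last first.
  rewrite big_pred0 //.
  apply: mulr_ge0; last exact: ltW.
  by apply: mulr_ge0 => //; apply: mulr_ge0 => //; apply: sqr_ge0.
rewrite [lt_onat _]/lt_onat.
have Cge0 : 0 <= (3 * tau + 1) ^+ 2 / 4 * n%:R * delta ^+ 2.
  apply: mulr_ge0; last exact: ltW.
  by apply: mulr_ge0 => //; apply: mulr_ge0 => //; apply: sqr_ge0.
case: (leqP n K) => nK.
  apply: le_trans Cge0.
  apply: (@le_trans _ _ (\sum_(0 <= j < n.+1 | false) b j ^+ 2)).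
    apply: sum_mono => //; first by move=> i ilt Ki; exact: l5 _ _ _ ilt Ki nK.
  by rewrite big_pred0.
have [PK _] := ominS _ _ hK.
have [k0 hk0] : exists k0, kdp_m tau delta yd n = Some k0.
  apply: (ominE _ n); split => //.
  rewrite big_geq // sqrtr0; apply: mulr_ge0; last exact: ltW.
  apply: mulr_ge0; [apply: ltW; lra | exact: sqrtr_ge0].
have [[_ hsq] _] := ominS _ _ hk0.
have k0K := PK n k0 (leq_ltn_trans (leq0n K) nK) hk0.
set A := \sum_(k0.+1 <= j < n.+1) yd j ^+ 2 in hsq.
have A0 : 0 <= A by apply: sumr_ge0 => j _; apply: sqr_ge0.
have hA : A <= tau ^+ 2 * n%:R * delta ^+ 2.
  have : Num.sqrt A ^+ 2 <= (tau * Num.sqrt n%:R * delta) ^+ 2.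
    rewrite ler_sqr //; first exact: sqrtr_ge0.
    rewrite nnegrE; apply: mulr_ge0; last exact: ltW.
    apply: mulr_ge0; [apply: ltW; lra | exact: sqrtr_ge0].
  by rewrite !exprMn !sqr_sqrtr.
pose al := 1 + (tau + 1) / (2 * tau).
pose be := 1 + (2 * tau) / (tau + 1).
apply: (@le_trans _ _ (\sum_(0 <= j < n.+1 | (K < j)%N) (al * yd j ^+ 2 + be * e j ^+ 2))).
  apply: ler_sum => j _.
  have -> : b j = yd j - e j by rewrite /yd addrK.
  by apply: pw; lra.
rewrite big_split /= -!mulr_sumr.
have SY : \sum_(0 <= j < n.+1 | (K < j)%N) yd j ^+ 2 <= A.
  rewrite /A sum_shift; apply: sum_mono => //.
    by move=> i _ Ki; apply: leq_ltn_trans k0K Ki.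
  by move=> i _ _; apply: sqr_ge0.
have SE : \sum_(0 <= j < n.+1 | (K < j)%N) e j ^+ 2 <= \sum_(1 <= j < n.+1) e j ^+ 2.
  rewrite sum_shift; apply: sum_mono => //.
    by move=> i _ Ki; apply: leq_ltn_trans (leq0n K) Ki.
  by move=> i _ _; apply: sqr_ge0.
have [_ hup] := Eb n kn3.
have al0 : 0 <= al by rewrite /al; apply: addr_ge0 => //; apply: divr_ge0; lra.
have be0 : 0 <= be by rewrite /be; apply: addr_ge0 => //; apply: divr_ge0; lra.
have X0 : 0 <= n%:R * delta ^+ 2 :> R by apply: mulr_ge0 => //; apply: ltW.
have h1 : al * \sum_(0 <= j < n.+1 | (K < j)%N) yd j ^+ 2 <= al * (tau ^+ 2 * n%:R * delta ^+ 2).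
  by apply: ler_wpM2l => //; apply: le_trans hA.
have h2 : be * \sum_(0 <= j < n.+1 | (K < j)%N) e j ^+ 2 <= be * ((1 + eps) * n%:R * delta ^+ 2).
  by apply: ler_wpM2l => //; apply: le_trans hup; apply: le_trans SE.
have h3 : be * ((1 + eps) * n%:R * delta ^+ 2) <= be * ((tau + 1) ^+ 2 / 4 * n%:R * delta ^+ 2).
  apply: ler_wpM2l => //; apply: ler_wpM2r; [exact: ltW|]; apply: ler_wpM2r => //; lra.
have h4 : al * (tau ^+ 2 * n%:R * delta ^+ 2) + be * ((tau + 1) ^+ 2 / 4 * n%:R * delta ^+ 2)
    = (3 * tau + 1) ^+ 2 / 4 * n%:R * delta ^+ 2.
  rewrite /al /be; field; apply/andP; split; rewrite gt_eqF //; lra.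
lra.
Qed.
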